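(* Let $\mathcal N$ be a fully connected feed-forward ReLU network with $d$ hidden layers. For all $\theta$ outside a Lebesgue-null subset of $\mathbb R^{\#\mathrm{params}}$ the following holds: whenever $\mathcal A_1\neq\mathcal A_2$ are activation patterns with $\mathcal R(\mathcal A_1;\theta)\neq\emptyset$ and $\mathcal R(\mathcal A_2;\theta)\neq\emptyset$, and such that for each $j\in\{1,2\}$ and each hidden layer there is a neuron $z$ in that layer with $a_{j,z}=1$, the (constant) value of $\nabla\mathcal N(x;\theta)$ for $x$ in $\mathcal R(\mathcal A_1;\theta)$ differs from its value for $x$ in $\mathcal R(\mathcal A_2;\theta)$.
   Context: A fully connected feed-forward ReLU network $\mathcal N$ with input dimension $n_{\mathrm{in}}$ and output dimension $1$ has hidden layers $1,\dots,d$, every neuron of layer $\ell-1$ (or every input coordinate, for $\ell=1$) joined to every neuron of layer $\ell$, each edge carrying its own weight. A neuron $z$ in layer $1$ has pre-activation $z(x;\theta)=\sum_i w_{z,i}x_i$; a neuron $z$ in layer $\ell\ge2$ has pre-activation $z(x;\theta)=\sum_{z'}w_{z,z'}\max\{0,z'(x;\theta)-b_{z'}\}$; $b_z$ is its bias. The output is $\mathcal N(x;\theta)=\sum_z w_z\max\{0,z(x;\theta)-b_z\}-b_{\mathrm{out}}$ over neurons of layer $d$. $\theta$ is the vector of all weights and biases. An activation pattern is $\mathcal A_j=\{a_{j,z}\}\in\{-1,1\}^{\#\mathrm{neurons}}$, with activation region $\mathcal R(\mathcal A_j;\theta)=\{x:\ \mathrm{sgn}(z(x;\theta)-b_z)=a_{j,z}\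 \forall z\}$; $\mathcal N(\cdot;\theta)$ is affine on each activation region. *)

(* Defs.v *)
From Stdlib Require Import Reals Lra Lia Arith List.
Open Scope R_scope.

Fixpoint rsum (n : nat) (f : nat -> R) : R :=
  match n with O => 0 | S m => rsum m f + f m end.
Fixpoint rprod (n : nat) (f : nat -> R) : R :=
  match n with O => 1 | S m => rprod m f * f m end.
Fixpoint nsum (n : nat) (f : nat -> nat) : nat :=
  match n with O => 0%nat | S m => (nsum m f + f m)%nat end.

(* Lebesgue-null subset of R^P (points of R^P are functions nat -> R of which
   only the coordinates 0..P-1 matter): for every eps > 0 it is covered by
   countably many closed boxes of total volume <= eps. *)
Definition lebesgue_null (P : nat) (S : (nat -> R) -> Prop) : Prop :=
  forall eps : R, 0 < eps ->
  exists a b : nat -> nat -> R,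
    (forall m i, a m i <= b m i) /\
    (forall th, S th -> exists m, forall i, (i < P)%nat -> a m i <= th i <= b m i) /\
    (forall M, rsum M (fun m => rprod P (fun i => b m i - a m i)) <= eps).

(* Architecture: input dimension n_in, hidden widths [n_1; ...; n_d].
   Hidden layer l (1 <= l <= d) is indexed here by k = l - 1. *)
Section Net.
Variable n_in : nat.
Variable widths : list nat.

Definition depth : nat := length widths.
Definition width (k : nat) : nat := nth k widths 0%nat.
Definition nprev (k : nat) : nat :=
  match k with O => n_in | S k' => width k' end.

(* layout of the parameter vector theta in R^P:
   for each hidden layer k: its weights, then its biases; then output weights
   and the output bias. *)
Definition off (k : nat) : nat := nsum k (fun m => nprev m * width m + width m)%nat.
Definition widx (k j i : nat) : nat := (off k + j * nprev k + i)%nat.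
Definition bidx (k j : nat) : nat := (off k + nprev k * width k + j)%nat.
Definition oidx (j : nat) : nat := (off depth + j)%nat.
Definition obidx : nat := (off depth + nprev depth)%nat.
Definition nparams : nat := (obidx + 1)%nat.

Definition relu (t : R) : R := Rmax 0 t.

(* post-activation outputs of "layer" k (k = 0: the input coordinates x_i;
   k+1: max{0, z - b_z} for neuron z of hidden layer k) *)
Fixpoint post (th : nat -> R) (x : nat -> R) (k : nat) : nat -> R :=
  match k with
  | O => x
  | S k' => fun j =>
      relu (rsum (nprev k') (fun i => th (widx k' j i) * post th x k' i)
            - th (bidx k' j))
  end.

Definition preact (th : nat -> R) (x : nat -> R) (k j : nat) : R :=
  rsum (nprev k) (fun i => th (widx k j i) * post th x k i).

Definition net (th : nat -> R) (x : nat -> R) : R :=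
  rsum (nprev depth) (fun j => th (oidx j) * post th x depth j) - th obidx.

(* activation patterns: A k j = true means a_z = 1, false means a_z = -1,
   for neuron j of hidden layer k (only k < depth, j < width k matter) *)
Definition pattern := nat -> nat -> bool.

Definition pattern_eq (A1 A2 : pattern) : Prop :=
  forall k j, (k < depth)%nat -> (j < width k)%nat -> A1 k j = A2 k j.

Definition in_region (A : pattern) (th : nat -> R) (x : nat -> R) : Prop :=
  forall k j, (k < depth)%nat -> (j < width k)%nat ->
    if A k j then preact th x k j - th (bidx k j) > 0
             else preact th x k j - th (bidx k j) < 0.

Definition active_each_layer (A : pattern) : Prop :=
  forall k, (k < depth)%nat -> exists j, (j < width k)%nat /\ A k j = true.

Definition unit_vec (i : nat) : nat -> R := fun m => if Nat.eqb m i then 1 else 0.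

Definition is_gradient (th : nat -> R) (x : nat -> R) (g : nat -> R) : Prop :=
  forall i, (i < n_in)%nat ->
    derivable_pt_lim (fun t => net th (fun m => x m + t * unit_vec i m)) 0 (g i).

End Net.

(* Main.v *)
Require Import Defs.
From Stdlib Require Import Reals Lra Lia Arith List FunctionalExtensionality ClassicalEpsilon Classical.
Open Scope R_scope.

Lemma rsum_ext n f g : (forall i, (i < n)%nat -> f i = g i) -> rsum n f = rsum n g.
Proof. induction n; simpl; intros H; auto. rewrite IHn by (intros; apply H; lia). rewrite H by lia. auto. Qed.
Lemma rsum_plus n f g : rsum n (fun i => f i + g i) = rsum n f + rsum n g.
Proof. induction n; simpl; lra. Qed.
Lemma rsum_minus n f g : rsum n (fun i => f i - g i) = rsum n f - rsum n g.
Proof. induction n; simpl; lra. Qed.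
Lemma rsum_scal n c f : rsum n (fun i => c * f i) = c * rsum n f.
Proof. induction n; simpl; [lra|]. rewrite IHn. ring. Qed.
Lemma rsum_zero n : rsum n (fun _ => 0) = 0.
Proof. induction n; simpl; lra. Qed.
Lemma rsum_nonneg n f : (forall i, (i<n)%nat -> 0 <= f i) -> 0 <= rsum n f.
Proof. induction n; simpl; intros H; [lra|]. pose proof (H n (Nat.lt_succ_diag_r n)).
  assert (0 <= rsum n f) by (apply IHn; intros; apply H; lia). lra. Qed.
Lemma rsum_le n f g : (forall i, (i<n)%nat -> f i <= g i) -> rsum n f <= rsum n g.
Proof. induction n; simpl; intros H; [lra|]. specialize (H n (Nat.lt_succ_diag_r n)) as Hn.
  assert (rsum n f <= rsum n g) by (apply IHn; intros; apply H; lia). lra. Qed.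
Lemma rsum_abs n f : Rabs (rsum n f) <= rsum n (fun i => Rabs (f i)).
Proof. induction n; simpl. rewrite Rabs_R0; lra.
  eapply Rle_trans. apply Rabs_triang. lra. Qed.
Lemma rsum_split n f p : (p < n)%nat -> rsum n f = f p + rsum n (fun i => if Nat.eqb i p then 0 else f i).
Proof. induction n; intros; [lia|]. simpl. destruct (Nat.eq_dec p n).
  - subst. rewrite Nat.eqb_refl.
    assert (rsum n (fun i => if Nat.eqb i n then 0 else f i) = rsum n f) as E.
    { apply rsum_ext. intros; destruct (Nat.eqb_spec i n); [lia|auto]. }
    rewrite E. lra.
  - rewrite IHn by lia. destruct (Nat.eqb_spec n p); [lia|]. lra.
Qed.
Lemma rsum_term_le n f p : (p<n)%nat -> (forall i, (i<n)%nat -> 0 <= f i) -> f p <= rsum n f.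
Proof. intros Hp H. rewrite (rsum_split n f p Hp).
  assert (0 <= rsum n (fun i => if Nat.eqb i p then 0 else f i)).
  { apply rsum_nonneg. intros. destruct (Nat.eqb i p). lra. auto. } lra. Qed.
Lemma rsum_const n c : rsum n (fun _ => c) = INR n * c.
Proof. induction n; simpl rsum. simpl; ring. rewrite IHn, S_INR. ring. Qed.
Lemma rsum_shift n f : rsum (S n) f = f 0%nat + rsum n (fun i => f (S i)).
Proof. induction n. simpl; ring. change (rsum (S (S n)) f) with (rsum (S n) f + f (S n)).
  rewrite IHn. simpl. ring. Qed.

Definition box := ((nat -> R) * (nat -> R))%type.
Definition inbox (P:nat) (bx:box) (th : nat -> R) := forall i, (i<P)%nat -> fst bx i <= th i <= snd bx i.
Definition vol P (bx:box) := rprod P (fun i => snd bx i - fst bx i).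
Definition valid (bx:box) := forall i, fst bx i <= snd bx i.
Fixpoint volL P (l : list box) := match l with nil => 0 | b :: l => vol P b + volL P l end.
Definition fcover P (S : (nat->R)->Prop) (d : R) := exists l : list box,
  (forall b, In b l -> valid b) /\ (forall th, S th -> exists b, In b l /\ inbox P b th) /\ volL P l <= d.
Definition fnull P (S : (nat -> R) -> Prop) := forall eps, 0 < eps -> exists L : nat -> list box,
  (forall N b, In b (L N) -> valid b) /\ (forall th, S th -> exists N b, In b (L N) /\ inbox P b th)
  /\ (forall K, rsum K (fun N => volL P (L N)) <= eps).

Lemma rprod_nonneg n f : (forall i, (i<n)%nat -> 0 <= f i) -> 0 <= rprod n f.
Proof. induction n; simpl; intros H; [lra|]. apply Rmult_le_pos. apply IHn; intros; apply H; lia. apply H; lia. Qed.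
Lemma vol_nonneg P b : valid b -> 0 <= vol P b.
Proof. intros H. apply rprod_nonneg. intros. specialize (H i). lra. Qed.
Lemma volL_nonneg P l : (forall b, In b l -> valid b) -> 0 <= volL P l.
Proof. induction l; simpl; intros H; [lra|]. pose proof (vol_nonneg P a (H a (or_introl eq_refl))).
  assert (0 <= volL P l) by (apply IHl; auto). lra. Qed.
Lemma volL_app P l1 l2 : volL P (l1 ++ l2) = volL P l1 + volL P l2.
Proof. induction l1; simpl; lra. Qed.

Lemma fnull_mono P (S T : (nat -> R) -> Prop) : (forall th, S th -> T th) -> fnull P T -> fnull P S.
Proof. intros H HT eps He. destruct (HT eps He) as [L [H1 [H2 H3]]]. exists L; repeat split; auto. Qed.
Lemma fnull_empty P : fnull P (fun _ => False).
Proof. intros eps He. exists (fun _ => nil). repeat split; simpl; try tauto.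
  intros K. rewrite rsum_zero. lra. Qed.
Lemma fnull_union P S T : fnull P S -> fnull P T -> fnull P (fun th => S th \/ T th).
Proof. intros HS HT eps He.
  destruct (HS (eps/2) ltac:(lra)) as [L1 [A1 [B1 C1]]].
  destruct (HT (eps/2) ltac:(lra)) as [L2 [A2 [B2 C2]]].
  exists (fun N => L1 N ++ L2 N). repeat split.
  - intros N b Hb. apply in_app_or in Hb. destruct Hb; eauto.
  - intros th [Hs|Ht].
    + destruct (B1 th Hs) as [N [b [Hb Hi]]]. exists N, b. split; auto. apply in_or_app; auto.
    + destruct (B2 th Ht) as [N [b [Hb Hi]]]. exists N, b. split; auto. apply in_or_app; auto.
  - intros K. rewrite (rsum_ext K _ (fun N => volL P (L1 N) + volL P (L2 N))).
    rewrite rsum_plus. specialize (C1 K). specialize (C2 K). lra.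
    intros; apply volL_app.
Qed.
Lemma fnull_guard P (C : Prop) S : (C -> fnull P S) -> fnull P (fun th => C /\ S th).
Proof. intros H. destruct (classic C) as [c|c].
  - apply (fnull_mono P _ S). tauto. auto.
  - apply (fnull_mono P _ (fun _ => False)). tauto. apply fnull_empty. Qed.
Lemma fnull_list P {X} (l : list X) (S : X -> (nat -> R) -> Prop) :
  (forall x, In x l -> fnull P (S x)) -> fnull P (fun th => exists x, In x l /\ S x th).
Proof. induction l; intros H.
  - apply (fnull_mono P _ (fun _ => False)). intros th [x [[] _]]. apply fnull_empty.
  - apply (fnull_mono P _ (fun th => S a th \/ (exists x, In x l /\ S x th))).
    + intros th [x [[<-|Hx] Hs]]; [left; auto | right; eauto].
    + apply fnull_union. apply H; left; auto. apply IHl. intros; apply H; right; auto.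
Qed.

Lemma geom_sum eps K : rsum K (fun n => eps / 2 ^ (S n)) = eps * (1 - / 2 ^ K).
Proof. induction K. simpl. field. change (rsum (S K) (fun n => eps / 2 ^ S n)) with (rsum K (fun n => eps / 2 ^ S n) + eps / 2 ^ S K). rewrite IHK.
  assert (0 < 2 ^ K) by (apply pow_lt; lra). simpl. field. lra. Qed.

Lemma fnull_countable P (Sf : nat -> (nat -> R) -> Prop) :
  (forall n d, 0 < d -> fcover P (Sf n) d) -> fnull P (fun th => exists n, Sf n th).
Proof. intros H eps He.
  assert (Hd : forall n, 0 < eps / 2 ^ (S n)).
  { intros n. apply Rdiv_lt_0_compat. auto. apply pow_lt; lra. }
  pose (L := fun n => proj1_sig (constructive_indefinite_description _ (H n _ (Hd n)))).
  assert (HL : forall n, (forall b, In b (L n) -> valid b) /\ (forall th, Sf n th -> exists b, In b (L n) /\ inbox P b th) /\ volL P (L n) <= eps / 2 ^ (S n)).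
  { intros n. unfold L. destruct (constructive_indefinite_description _ _). simpl. auto. }
  exists L. repeat split.
  - intros N b Hb. destruct (HL N) as [A _]. auto.
  - intros th [n Hn]. destruct (HL n) as [_ [B _]]. destruct (B th Hn) as [b [? ?]]. exists n, b; auto.
  - intros K. eapply Rle_trans. apply rsum_le. intros i _. destruct (HL i) as [_ [_ C]]. exact C.
    rewrite geom_sum. assert (0 < / 2 ^ K) by (apply Rinv_0_lt_compat, pow_lt; lra).
    assert (eps * / 2 ^ K > 0) by (apply Rmult_lt_0_compat; lra). nra.
Qed.

Definition zb : box := (fun _ => 0, fun _ => 0).
Fixpoint flat (L : nat -> list box) K := match K with O => nil | S k => flat L k ++ L k end.

Lemma flat_prefix L K K' : (K <= K')%nat -> exists r, flat L K' = flat L K ++ r.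
Proof. induction 1. exists nil; rewrite app_nil_r; auto.
  destruct IHle as [r Hr]. exists (r ++ L m). simpl. rewrite Hr, app_assoc. auto. Qed.

Lemma nth_sum_le P l M : (forall b, In b l -> valid b) -> (0 < P)%nat ->
  rsum M (fun m => vol P (nth m l zb)) <= volL P l.
Proof. intros Hv HP. revert M. induction l; intros M.
  - rewrite (rsum_ext M _ (fun _ => 0)). rewrite rsum_zero; simpl; lra.
    intros i _. assert (nth i nil zb = zb) as E by (destruct i; auto). rewrite E.
    unfold vol; simpl. destruct P; [lia|]. simpl; ring.
  - destruct M. simpl. pose proof (volL_nonneg P (a::l) Hv). simpl in H. lra.
    rewrite rsum_shift. simpl. assert (rsum M (fun i => vol P (nth i l zb)) <= volL P l).
    apply IHl. intros; apply Hv; right; auto. lra.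
Qed.

Lemma fnull_lebesgue P Sx : (0 < P)%nat -> fnull P Sx -> lebesgue_null P Sx.
Proof. intros HP H eps He. destruct (H eps He) as [L [A [B C]]].
  set (L' := fun N => L N ++ zb :: nil).
  assert (Hlen : forall K, (K <= length (flat L' K))%nat).
  { assert (forall K, (1 <= length (L' K))%nat) as HL1.
    { intros K; unfold L'; rewrite length_app; simpl; lia. }
    induction K; simpl; [lia|]. rewrite length_app. specialize (HL1 K). lia. }
  set (sq := fun m => nth m (flat L' (S m)) zb).
  assert (Hkey : forall K m, (m < length (flat L' K))%nat -> nth m (flat L' K) zb = sq m).
  { intros K m Hm. unfold sq. destruct (le_ge_dec K (S m)) as [h|h].
    - destruct (flat_prefix L' _ _ h) as [r Hr]. rewrite Hr, app_nth1; auto.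
    - destruct (flat_prefix L' _ _ h) as [r Hr]. rewrite Hr, app_nth1; auto.
      all: try (specialize (Hlen (S m)); lia). }
  assert (Hval : forall K b, In b (flat L' K) -> valid b).
  { induction K; simpl; intros b Hb; [tauto|]. apply in_app_or in Hb. destruct Hb as [Hb|Hb]; auto.
    unfold L' in Hb. apply in_app_or in Hb. destruct Hb as [Hb|[<-|[]]]. eauto.
    intros i; simpl; lra. }
  assert (Hvz : vol P zb = 0). { unfold vol; simpl. destruct P; [lia|]. simpl. ring. }
  exists (fun m i => fst (sq m) i), (fun m i => snd (sq m) i). repeat split.
  - intros m i. unfold sq. destruct (nth_in_or_default m (flat L' (S m)) zb) as [h|h].
    apply (Hval _ _ h). rewrite h. simpl; lra.
  - intros th Hs. destruct (B th Hs) as [N [b [Hb Hi]]].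
    assert (Hb' : In b (L' N)) by (apply in_or_app; auto).
    destruct (In_nth _ _ zb Hb') as [p [Hp Hnth]].
    exists (length (flat L' N) + p)%nat. intros i Hi'.
    rewrite <- (Hkey (S N)). simpl. rewrite app_nth2 by lia.
    replace (length (flat L' N) + p - length (flat L' N))%nat with p by lia. rewrite Hnth. apply Hi; auto.
    simpl. rewrite length_app. lia.
  - intros M. change (rsum M (fun m => rprod P (fun i => snd (sq m) i - fst (sq m) i))) with
      (rsum M (fun m => vol P (sq m))).
    rewrite (rsum_ext M _ (fun m => vol P (nth m (flat L' M) zb))).
    2:{ intros i Hi. rewrite Hkey; auto. specialize (Hlen M). lia. }
    eapply Rle_trans. apply nth_sum_le; auto. apply Hval.
    assert (forall K, volL P (flat L' K) = rsum K (fun N => volL P (L N))).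
    { induction K; simpl; auto. rewrite volL_app, IHK. unfold L'. rewrite volL_app. simpl. lra. }
    rewrite H0. apply C.
Qed.

Definition upd (th : nat -> R) v t : nat -> R := fun m => if Nat.eqb m v then t else th m.
Definition indep v (f : (nat -> R) -> R) := forall th t, f (upd th v t) = f th.
Definition dist1 P (th th' : nat -> R) := rsum P (fun i => Rabs (th i - th' i)).
Definition incube P N (th : nat -> R) := forall i, (i<P)%nat -> Rabs (th i) <= N.
Definition locLip P (f : (nat -> R) -> R) := forall N, 0 <= N -> exists L, 0 <= L /\
  forall th th', incube P N th -> incube P N th' -> Rabs (f th - f th') <= L * dist1 P th th'.

Lemma dist1_nonneg P th th' : 0 <= dist1 P th th'.
Proof. apply rsum_nonneg. intros; apply Rabs_pos. Qed.

Lemma locLip_const P c : locLip P (fun _ => c).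
Proof. intros N HN. exists 0. split. lra. intros. rewrite Rminus_diag, Rabs_R0.
  pose proof (dist1_nonneg P th th'). lra. Qed.
Lemma locLip_coord P w : (w < P)%nat -> locLip P (fun th => th w).
Proof. intros Hw N HN. exists 1. split. lra. intros th th' _ _. rewrite Rmult_1_l.
  unfold dist1. apply (rsum_term_le P (fun i => Rabs (th i - th' i)) w Hw). intros; apply Rabs_pos. Qed.
Lemma locLip_plus P f g : locLip P f -> locLip P g -> locLip P (fun th => f th + g th).
Proof. intros Hf Hg N HN. destruct (Hf N HN) as [L1 [H1 F]]. destruct (Hg N HN) as [L2 [H2 G]].
  exists (L1 + L2). split. lra. intros th th' A B.
  specialize (F th th' A B). specialize (G th th' A B).
  replace (f th + g th - (f th' + g th')) with ((f th - f th') + (g th - g th')) by ring.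
  eapply Rle_trans. apply Rabs_triang. lra. Qed.
Lemma locLip_opp P f : locLip P f -> locLip P (fun th => - f th).
Proof. intros Hf N HN. destruct (Hf N HN) as [L1 [H1 F]]. exists L1. split; auto. intros.
  replace (- f th - - f th') with (- (f th - f th')) by ring. rewrite Rabs_Ropp. auto. Qed.
Lemma locLip_minus P f g : locLip P f -> locLip P g -> locLip P (fun th => f th - g th).
Proof. intros. apply (locLip_plus P f (fun th => - g th)); auto. apply locLip_opp; auto. Qed.
Lemma locLip_ext P f g : (forall th, f th = g th) -> locLip P f -> locLip P g.
Proof. intros E Hf N HN. destruct (Hf N HN) as [L [H F]]. exists L. split; auto. intros.
  rewrite <- !E. auto. Qed.

Lemma dist1_zero_le P N th : incube P N th -> dist1 P th (fun _ => 0) <= INR P * N.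
Proof. intros H. unfold dist1. rewrite <- rsum_const. apply rsum_le. intros i Hi.
  rewrite Rminus_0_r. auto. Qed.
Lemma incube_zero P N : 0 <= N -> incube P N (fun _ => 0).
Proof. intros HN i _. rewrite Rabs_R0. auto. Qed.

Lemma locLip_bound P f : locLip P f -> forall N, 0 <= N -> exists M, 0 <= M /\ forall th, incube P N th -> Rabs (f th) <= M.
Proof. intros Hf N HN. destruct (Hf N HN) as [L [HL F]].
  exists (Rabs (f (fun _ => 0)) + L * (INR P * N)). split.
  { pose proof (Rabs_pos (f (fun _ => 0))). pose proof (pos_INR P).
    assert (0 <= L * (INR P * N)) by (apply Rmult_le_pos; auto; apply Rmult_le_pos; auto). lra. }
  intros th Hth. specialize (F th _ Hth (incube_zero P N HN)).
  pose proof (dist1_zero_le P N th Hth).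
  assert (L * dist1 P th (fun _ => 0) <= L * (INR P * N)) by (apply Rmult_le_compat_l; auto).
  replace (f th) with ((f th - f (fun _ => 0)) + f (fun _ => 0)) by ring.
  eapply Rle_trans. apply Rabs_triang. lra. Qed.

Lemma locLip_mult P f g : locLip P f -> locLip P g -> locLip P (fun th => f th * g th).
Proof. intros Hf Hg N HN. destruct (Hf N HN) as [L1 [H1 F]]. destruct (Hg N HN) as [L2 [H2 G]].
  destruct (locLip_bound P f Hf N HN) as [M1 [HM1 B1]]. destruct (locLip_bound P g Hg N HN) as [M2 [HM2 B2]].
  exists (M1 * L2 + M2 * L1). split. nra. intros th th' A B.
  specialize (F th th' A B). specialize (G th th' A B). specialize (B1 th A). specialize (B2 th' B).
  replace (f th * g th - f th' * g th') with (f th * (g th - g th') + g th' * (f th - f th')) by ring.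
  eapply Rle_trans. apply Rabs_triang. rewrite !Rabs_mult.
  pose proof (dist1_nonneg P th th').
  assert (Rabs (f th) * Rabs (g th - g th') <= M1 * (L2 * dist1 P th th')).
  { apply Rmult_le_compat; auto; apply Rabs_pos. }
  assert (Rabs (g th') * Rabs (f th - f th') <= M2 * (L1 * dist1 P th th')).
  { apply Rmult_le_compat; auto; apply Rabs_pos. }
  nra. Qed.

Lemma locLip_rsum P n (f : nat -> (nat -> R) -> R) : (forall j, (j < n)%nat -> locLip P (f j)) ->
  locLip P (fun th => rsum n (fun j => f j th)).
Proof. induction n; intros H. apply (locLip_const P 0).
  simpl. apply (locLip_plus P (fun th => rsum n (fun j => f j th)) (f n)). apply IHn; intros; apply H; lia. apply H; lia. Qed.

Lemma indep_const v c : indep v (fun _ => c).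
Proof. intros th t; auto. Qed.
Lemma indep_coord v w : w <> v -> indep v (fun th => th w).
Proof. intros H th t. unfold upd. destruct (Nat.eqb_spec w v); [lia|auto]. Qed.
Lemma indep_plus v f g : indep v f -> indep v g -> indep v (fun th => f th + g th).
Proof. intros Hf Hg th t. rewrite Hf, Hg; auto. Qed.
Lemma indep_minus v f g : indep v f -> indep v g -> indep v (fun th => f th - g th).
Proof. intros Hf Hg th t. rewrite Hf, Hg; auto. Qed.
Lemma indep_mult v f g : indep v f -> indep v g -> indep v (fun th => f th * g th).
Proof. intros Hf Hg th t. rewrite Hf, Hg; auto. Qed.
Lemma indep_rsum v n (f : nat -> (nat -> R) -> R) : (forall j, (j < n)%nat -> indep v (f j)) ->
  indep v (fun th => rsum n (fun j => f j th)).
Proof. intros H th t. apply rsum_ext. intros; apply H; auto. Qed.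

Definition updn (c : nat -> nat) m r : nat -> nat := fun i => if Nat.eqb i m then r else c i.
Fixpoint cells (v K n : nat) : list (nat -> nat) := match n with
 | O => (fun _ => 0%nat) :: nil
 | S m => if Nat.eqb m v then cells v K m
          else flat_map (fun c => map (fun r => updn c m r) (seq 0 K)) (cells v K m) end.
Fixpoint cnt v n := match n with O => O | S m => if Nat.eqb m v then cnt v m else S (cnt v m) end.

Lemma length_flat_map_seq (l : list (nat -> nat)) K m :
  length (flat_map (fun c => map (fun r => updn c m r) (seq 0 K)) l) = (K * length l)%nat.
Proof. induction l; simpl. lia. rewrite length_app, length_map, length_seq, IHl. lia. Qed.

Lemma length_cells v K n : length (cells v K n) = (K ^ cnt v n)%nat.
Proof. induction n; simpl. auto. destruct (Nat.eqb n v); auto.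
  rewrite length_flat_map_seq, IHn. simpl. lia. Qed.

Lemma cnt_eq v n : cnt v n = (if Nat.ltb v n then n - 1 else n)%nat.
Proof. induction n; simpl. auto. rewrite IHn.
  destruct (Nat.eqb_spec n v); destruct (Nat.ltb_spec v n); destruct (Nat.ltb_spec v (S n)); lia. Qed.

Lemma cells_cover v K n (Q : nat -> nat -> Prop) :
  (forall i, (i<n)%nat -> i <> v -> exists r, (r<K)%nat /\ Q i r) ->
  exists c, In c (cells v K n) /\ forall i, (i<n)%nat -> i <> v -> (c i < K)%nat /\ Q i (c i).
Proof. induction n; intros H.
  - exists (fun _ => 0%nat). split. left; auto. intros; lia.
  - simpl. destruct (Nat.eqb_spec n v).
    + destruct IHn as [c [Hc Hq]]. intros; apply H; lia. exists c. split; auto.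
      intros i Hi Hv. apply Hq; lia.
    + destruct IHn as [c [Hc Hq]]. intros; apply H; lia.
      destruct (H n (Nat.lt_succ_diag_r n) n0) as [r [Hr Qr]].
      exists (updn c n r). split.
      * apply in_flat_map. exists c. split; auto. apply in_map. apply in_seq. lia.
      * intros i Hi Hv. unfold updn. destruct (Nat.eqb_spec i n). subst; auto. apply Hq; lia.
Qed.

Lemma grid_index K h y : (1 <= K)%nat -> 0 < h -> 0 <= y <= INR K * h ->
  exists r, (r < K)%nat /\ INR r * h <= y <= (INR r + 1) * h.
Proof. induction K; intros HK Hh Hy. lia.
  destruct (Nat.eq_dec K 0). subst. exists 0%nat. split. lia. simpl in *. lra.
  destruct (Rle_lt_dec y (INR K * h)).
  - destruct IHK as [r0 [Hr Hr2]]; auto. lia. split; lra. exists r0; split; auto.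
  - exists K. split. lia. rewrite S_INR in Hy. lra.
Qed.

Lemma rprod_ext n f g : (forall i, (i < n)%nat -> f i = g i) -> rprod n f = rprod n g.
Proof. induction n; simpl; intros H; auto. rewrite IHn by (intros; apply H; lia). rewrite H by lia. auto. Qed.
Lemma rprod_const n b : rprod n (fun _ => b) = b ^ n.
Proof. induction n; simpl. auto. rewrite IHn. ring. Qed.
Lemma rprod_sel n v a b : (v < n)%nat -> rprod n (fun i => if Nat.eqb i v then a else b) = a * b ^ (n - 1).
Proof. induction n; intros Hv. lia. simpl rprod. destruct (Nat.eqb_spec n v).
  - subst. rewrite (rprod_ext _ _ (fun _ => b)). rewrite rprod_const.
    replace (S v - 1)%nat with v by lia. ring.
    intros i Hi. destruct (Nat.eqb_spec i v); [lia|auto].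
  - rewrite IHn by lia. replace (S n - 1)%nat with (S (n - 1)) by lia. simpl. ring.
Qed.

Lemma volL_map_le P {X} (g : X -> box) (l : list X) w : (forall c, In c l -> vol P (g c) <= w) ->
  volL P (map g l) <= INR (length l) * w.
Proof. induction l; cbn [map volL length]; intros H. simpl; lra.
  rewrite S_INR. assert (volL P (map g l) <= INR (length l) * w) by (apply IHl; intros; apply H; right; auto).
  specialize (H a (or_introl eq_refl)). lra. Qed.

Lemma abs_between x r : Rabs x <= r -> - r <= x <= r.
Proof. intros H. pose proof (Rle_abs x). pose proof (Rle_abs (-x)). rewrite Rabs_Ropp in H1. lra. Qed.

Lemma grid_cover P v (al be : (nat -> R) -> R) n d : (v < P)%nat -> locLip P al -> locLip P be ->
  indep v al -> indep v be -> 0 < d ->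
  fcover P (fun th => incube P (INR (S n)) th /\ 1 <= INR (S n) * Rabs (al th) /\ al th * th v + be th = 0) d.
Proof.
  intros Hv Lal Lbe Ial Ibe Hd.
  set (N := INR (S n)).
  assert (HN : 1 <= N). { unfold N. rewrite S_INR. pose proof (pos_INR n). lra. }
  destruct (Lal N ltac:(lra)) as [La [HLa Fa]].
  destruct (Lbe N ltac:(lra)) as [Lb [HLb Fb]].
  pose proof (pos_INR P) as HP.
  set (Cr := N * (La * N + Lb) * INR P).
  assert (HCr : 0 <= Cr). { unfold Cr. apply Rmult_le_pos; [|lra]. apply Rmult_le_pos. lra. nra. }
  set (W := 2 * Cr * (2 * N) ^ (P - 1) + 1).
  assert (HW : 1 <= W). { unfold W. assert (0 <= (2*N)^(P-1)) by (apply pow_le; lra). nra. }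
  set (Q := (La * INR P * N + 1) + W / d).
  assert (HLPN : 0 <= La * INR P * N) by (apply Rmult_le_pos; [apply Rmult_le_pos|]; lra).
  assert (HWd : 0 < W / d) by (apply Rdiv_lt_0_compat; lra).
  destruct (INR_unbounded (2 * N * Q)) as [k Hk].
  set (K := S k).
  assert (HK : INR K > 2 * N * Q). { unfold K. rewrite S_INR. lra. }
  assert (HQ : 0 < Q) by (unfold Q; lra).
  assert (HK0 : 0 < INR K) by nra.
  set (h := 2 * N / INR K).
  assert (Hh : 0 < h) by (unfold h; apply Rdiv_lt_0_compat; lra).
  assert (HhQ : h * Q < 1).
  { unfold h. apply (Rmult_lt_reg_r (INR K)); auto. field_simplify; [|lra]. lra. }
  assert (Hh1 : La * INR P * N * h < 1). { assert (h * (W/d) > 0) by nra. unfold Q in HhQ. nra. }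
  assert (Hh2 : h * W < d).
  { assert (h * (W / d) < 1). { assert (h * (La * INR P * N + 1) > 0) by nra. unfold Q in HhQ. nra. }
    replace (h * W) with (h * (W / d) * d) by (field; lra). nra. }
  assert (HKh : INR K * h = 2 * N) by (unfold h; field; lra).
  set (rho := Cr * h).
  set (yc := fun (c : nat -> nat) (i : nat) => if Nat.eqb i v then 0 else - N + (INR (c i) + / 2) * h).
  set (phi := fun c => - be (yc c) / al (yc c)).
  set (boxOf := fun c : nat -> nat =>
    if Rle_lt_dec 1 (2 * N * Rabs (al (yc c))) then
      ((fun i => if Nat.eqb i v then phi c - rho else - N + INR (c i) * h),
       (fun i => if Nat.eqb i v then phi c + rho else - N + (INR (c i) + 1) * h)) : box
    else zb).
  exists (map boxOf (cells v K P)). split; [|split].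
  -
    intros b Hb. apply in_map_iff in Hb. destruct Hb as [c [<- _]]. unfold boxOf.
    destruct (Rle_lt_dec _ _); intros i; simpl; [|lra].
    destruct (Nat.eqb i v). assert (0 <= rho) by (unfold rho; nra). lra. lra.
  -
    intros th [Hc [Ha Hz]].
    destruct (cells_cover v K P (fun i r => - N + INR r * h <= th i <= - N + (INR r + 1) * h)) as [c [Hcin Hcq]].
    { intros i Hi Hiv. specialize (Hc i Hi). apply abs_between in Hc.
      destruct (grid_index K h (th i + N)) as [r [Hr Hr2]]; auto. unfold K; lia. lra.
      exists r. split; auto. lra. }
    exists (boxOf c). split. apply in_map; auto.
    set (th0 := upd th v 0).
    assert (Ea0 : al th0 = al th) by apply Ial.
    assert (Eb0 : be th0 = be th) by apply Ibe.
    assert (Hc0 : incube P N th0).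
    { intros i Hi. unfold th0, upd. destruct (Nat.eqb i v). rewrite Rabs_R0; lra. auto. }
    assert (Hcy : incube P N (yc c)).
    { intros i Hi. unfold yc. destruct (Nat.eqb_spec i v). rewrite Rabs_R0; lra.
      destruct (Hcq i Hi n0) as [Hci _]. assert (INR (c i) + 1 <= INR K).
      { rewrite <- S_INR. apply le_INR. lia. }
      pose proof (pos_INR (c i)). apply Rabs_le. split. nra. nra. }
    assert (Hdist : dist1 P th0 (yc c) <= INR P * (h / 2)).
    { unfold dist1. rewrite <- rsum_const. apply rsum_le. intros i Hi.
      unfold th0, upd, yc. destruct (Nat.eqb_spec i v).
      rewrite Rminus_0_r, Rabs_R0. lra.
      destruct (Hcq i Hi n0) as [_ [Q1 Q2]]. apply Rabs_le. split; lra. }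
    assert (Ea : Rabs (al th - al (yc c)) <= La * (INR P * (h / 2))).
    { rewrite <- Ea0. eapply Rle_trans. apply Fa; auto. apply Rmult_le_compat_l; auto. }
    assert (Eb : Rabs (be th - be (yc c)) <= Lb * (INR P * (h / 2))).
    { rewrite <- Eb0. eapply Rle_trans. apply Fb; auto. apply Rmult_le_compat_l; auto. }
    assert (Hay : 1 <= 2 * N * Rabs (al (yc c))).
    { pose proof (Rabs_triang_inv (al th) (al (yc c))).
      assert (Rabs (al th) - La * (INR P * (h / 2)) <= Rabs (al (yc c))) by
        (rewrite Rabs_minus_sym in Ea; pose proof (Rabs_triang_inv2 (al th) (al (yc c))); 
         rewrite Rabs_minus_sym in Ea; lra).
      assert (2 * N * (Rabs (al th) - La * (INR P * (h / 2))) <= 2 * N * Rabs (al (yc c))) by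
        (apply Rmult_le_compat_l; lra).
      nra. }
    unfold boxOf. destruct (Rle_lt_dec 1 (2 * N * Rabs (al (yc c)))) as [_|Hlt]; [|lra].
    intros i Hi. simpl. destruct (Nat.eqb_spec i v).
    + subst i.
      assert (Hthv : Rabs (th v) <= N) by (apply Hc; auto).
      assert (Hrel : al (yc c) * th v + be (yc c) = (al (yc c) - al th) * th v + (be (yc c) - be th)) by lra.
      assert (Hb1 : Rabs (al (yc c) * th v + be (yc c)) <= (La * N + Lb) * (INR P * (h / 2))).
      { rewrite Hrel. eapply Rle_trans. apply Rabs_triang. rewrite Rabs_mult.
        rewrite Rabs_minus_sym in Ea. rewrite Rabs_minus_sym in Eb.
        assert (Rabs (al (yc c) - al th) * Rabs (th v) <= La * (INR P * (h / 2)) * N)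
          by (apply Rmult_le_compat; auto; apply Rabs_pos). nra. }
      assert (Hne : al (yc c) <> 0). { intros E. rewrite E, Rabs_R0 in Hay. lra. }
      assert (Hpos : 0 < Rabs (al (yc c))) by (apply Rabs_pos_lt; auto).
      assert (Hdiff : th v - phi c = (al (yc c) * th v + be (yc c)) / al (yc c)) by (unfold phi; field; auto).
      assert (Habs : Rabs (th v - phi c) <= rho).
      { rewrite Hdiff. unfold Rdiv. rewrite Rabs_mult, Rabs_inv.
        apply (Rmult_le_reg_r (Rabs (al (yc c)))); auto.
        rewrite Rmult_assoc, Rinv_l by lra. rewrite Rmult_1_r.
        unfold rho, Cr. assert (0 <= (La * N + Lb) * (INR P * (h / 2))) by (apply Rmult_le_pos; nra).
        assert ((La * N + Lb) * (INR P * (h / 2)) * 1 <= (La * N + Lb) * (INR P * (h / 2)) * (2 * N * Rabs (al (yc c))))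
          by (apply Rmult_le_compat_l; auto).
        nra. }
      apply abs_between in Habs. lra.
    + destruct (Hcq i Hi n0) as [_ Qi]. lra.
  -
    eapply Rle_trans. apply (volL_map_le P boxOf _ (2 * rho * h ^ (P - 1))).
    { intros c _. unfold boxOf. destruct (Rle_lt_dec _ _).
      - unfold vol. simpl. rewrite (rprod_ext _ _ (fun i => if Nat.eqb i v then 2 * rho else h)).
        rewrite rprod_sel; auto. lra.
        intros i _. destruct (Nat.eqb i v); ring.
      - assert (0 <= rho) by (unfold rho; nra). assert (0 <= h ^ (P - 1)) by (apply pow_le; lra).
        assert (Hz0 : 0 <= 2 * rho * h ^ (P - 1)) by nra. revert Hz0. generalize (2 * rho * h ^ (P - 1)).
        intros z Hz0. unfold vol; simpl. destruct P; [lia|]. simpl. rewrite Rminus_0_r, Rmult_0_r. auto. }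
    rewrite length_cells, cnt_eq. destruct (Nat.ltb_spec v P); [|lia].
    rewrite pow_INR.
    replace (INR K ^ (P - 1) * (2 * rho * h ^ (P - 1))) with (2 * Cr * (INR K * h) ^ (P - 1) * h)
      by (unfold rho; rewrite Rpow_mult_distr; ring).
    rewrite HKh. unfold W in Hh2. nra.
Qed.

Lemma finite_bound P th : exists M, 0 <= M /\ incube P M th.
Proof. induction P. exists 0. split. lra. intros i Hi; lia.
  destruct IHP as [M [HM H]]. exists (Rmax M (Rabs (th P))). split.
  eapply Rle_trans; [exact HM| apply Rmax_l].
  intros i Hi. destruct (Nat.eq_dec i P). subst; apply Rmax_r.
  eapply Rle_trans; [apply H; lia| apply Rmax_l]. Qed.

Lemma null_affine P v al be : (v < P)%nat -> locLip P al -> locLip P be -> indep v al -> indep v be ->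
  fnull P (fun th => al th = 0) -> fnull P (fun th => al th * th v + be th = 0).
Proof. intros Hv La Lb Ia Ib H0.
  apply (fnull_mono P _ (fun th => al th = 0 \/ exists n, (fun n th => incube P (INR (S n)) th /\ 1 <= INR (S n) * Rabs (al th) /\ al th * th v + be th = 0) n th)).
  - intros th Hz. destruct (Req_dec (al th) 0) as [E|E]; [left; auto|right].
    destruct (finite_bound P th) as [M [HM Hc]].
    assert (Hp : 0 < Rabs (al th)) by (apply Rabs_pos_lt; auto).
    destruct (INR_unbounded (Rmax M (/ Rabs (al th)))) as [n Hn].
    exists n. assert (INR (S n) > Rmax M (/ Rabs (al th))) by (rewrite S_INR; lra).
    pose proof (Rmax_l M (/ Rabs (al th))). pose proof (Rmax_r M (/ Rabs (al th))).
    split; [|split; auto].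
    + intros i Hi. specialize (Hc i Hi). lra.
    + assert (/ Rabs (al th) * Rabs (al th) = 1) by (field; lra).
      assert (/ Rabs (al th) * Rabs (al th) <= INR (S n) * Rabs (al th)) by (apply Rmult_le_compat_r; lra).
      lra.
  - apply fnull_union; auto. apply fnull_countable. intros n d Hd. apply grid_cover; auto.
Qed.

Section Net2.
Variable n_in : nat.
Variable widths : list nat.
Local Notation NP := (nparams n_in widths).
Local Notation np := (nprev n_in widths).
Local Notation wd := (width widths).
Local Notation dp := (depth widths).
Local Notation wi := (widx n_in widths).
Local Notation oi := (oidx n_in widths).
Local Notation ofs := (off n_in widths).

Lemma width_lt k : (0 < wd k)%nat -> (k < dp)%nat.
Proof. unfold width, depth. intros H. destruct (Nat.lt_ge_cases k (length widths)); auto.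
  rewrite nth_overflow in H; auto. lia. Qed.
Lemma off_S k : ofs (S k) = (ofs k + (np k * wd k + wd k))%nat.
Proof. reflexivity. Qed.
Lemma off_mono k k' : (k <= k')%nat -> (ofs k <= ofs k')%nat.
Proof. induction 1; auto. rewrite off_S. lia. Qed.
Lemma widx_lt k j i : (j < wd k)%nat -> (i < np k)%nat -> (wi k j i < ofs (S k))%nat.
Proof. intros. rewrite off_S. unfold widx. nia. Qed.
Lemma widx_ge k j i : (ofs k <= wi k j i)%nat.
Proof. unfold widx. lia. Qed.
Lemma widx_P k j i : (j < wd k)%nat -> (i < np k)%nat -> (wi k j i < NP)%nat.
Proof. intros. assert (k < dp)%nat by (apply width_lt; lia).
  pose proof (widx_lt k j i H H0). pose proof (off_mono (S k) dp ltac:(lia)).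
  unfold nparams, obidx. lia. Qed.
Lemma oidx_P j : (j < np dp)%nat -> (oi j < NP)%nat.
Proof. intros. unfold nparams, obidx, oidx. lia. Qed.
Lemma oidx_ge j : (ofs dp <= oi j)%nat.
Proof. unfold oidx. lia. Qed.

Fixpoint Dv (A : pattern) (i : nat) (m j : nat) (th : nat -> R) {struct m} : R :=
  match m with
  | O => unit_vec i j
  | S m' => if A m' j then rsum (np m') (fun j' => th (wi m' j j') * Dv A i m' j' th) else 0
  end.

Lemma D_locLip A i m j : (j < np m)%nat -> locLip NP (Dv A i m j).
Proof. revert j; induction m; intros j Hj.
  - apply (locLip_const NP (unit_vec i j)).
  - simpl in Hj. simpl. destruct (A m j).
    + apply (locLip_rsum NP (np m) (fun j' th => th (wi m j j') * Dv A i m j' th)).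
      intros j' Hj'. apply (locLip_mult NP (fun th => th (wi m j j')) (Dv A i m j')).
      apply locLip_coord. apply widx_P; auto. apply IHm; auto.
    + apply (locLip_const NP 0).
Qed.

Lemma D_indep A i m j v : (j < np m)%nat -> (ofs m <= v)%nat -> indep v (Dv A i m j).
Proof. revert j; induction m; intros j Hj Hv.
  - apply (indep_const v (unit_vec i j)).
  - simpl in Hj. simpl. destruct (A m j).
    + apply (indep_rsum v (np m) (fun j' th => th (wi m j j') * Dv A i m j' th)).
      intros j' Hj'. apply (indep_mult v (fun th => th (wi m j j')) (Dv A i m j')).
      apply indep_coord. pose proof (widx_lt m j j' Hj Hj'). lia.
      apply IHm; auto. pose proof (off_mono m (S m) ltac:(lia)). lia.
    + apply (indep_const v 0).
Qed.

Lemma D_split A i m j p th : A m j = true -> (p < np m)%nat ->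
  Dv A i (S m) j th = Dv A i m p th * th (wi m j p) +
     rsum (np m) (fun x => if Nat.eqb x p then 0 else th (wi m j x) * Dv A i m x th).
Proof. intros HA Hp. simpl. rewrite HA. rewrite (rsum_split _ _ p Hp). ring. Qed.

Lemma rest_locLip A i m j p : (j < wd m)%nat ->
  locLip NP (fun th => rsum (np m) (fun x => if Nat.eqb x p then 0 else th (wi m j x) * Dv A i m x th)).
Proof. intros Hj. apply (locLip_rsum NP (np m) (fun x th => if Nat.eqb x p then 0 else th (wi m j x) * Dv A i m x th)).
  intros x Hx. destruct (Nat.eqb x p). apply (locLip_const NP 0).
  apply (locLip_mult NP (fun th => th (wi m j x)) (Dv A i m x)).
  apply locLip_coord, widx_P; auto. apply D_locLip; auto. Qed.

Lemma rest_indep A i m j p : (j < wd m)%nat ->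
  indep (wi m j p) (fun th => rsum (np m) (fun x => if Nat.eqb x p then 0 else th (wi m j x) * Dv A i m x th)).
Proof. intros Hj. apply (indep_rsum _ (np m) (fun x th => if Nat.eqb x p then 0 else th (wi m j x) * Dv A i m x th)).
  intros x Hx. destruct (Nat.eqb_spec x p). apply (indep_const _ 0).
  apply (indep_mult _ (fun th => th (wi m j x)) (Dv A i m x)).
  apply indep_coord. unfold widx. lia. apply D_indep; auto. apply widx_ge. Qed.

Lemma Dnull A i : (i < n_in)%nat -> active_each_layer widths A ->
  forall m j, (j < np m)%nat -> (m = O -> j = i) -> (forall m', m = S m' -> A m' j = true) ->
  fnull NP (fun th => Dv A i m j th = 0).
Proof. intros Hi Hact. induction m; intros j Hj H0 HS.
  - rewrite H0 by auto. apply (fnull_mono NP _ (fun _ => False)).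
    intros th. simpl. unfold unit_vec. rewrite Nat.eqb_refl. lra. apply fnull_empty.
  - simpl in Hj. assert (Hm : (m < dp)%nat) by (apply width_lt; lia).
    assert (HA : A m j = true) by auto.
    assert (Hp : exists p, (p < np m)%nat /\ (m = O -> p = i) /\ (forall m', m = S m' -> A m' p = true)).
    { destruct m. exists i. simpl. split; auto. split; auto. intros; lia.
      destruct (Hact m ltac:(lia)) as [p [Hp1 Hp2]]. exists p. simpl. split; auto. split. intros; lia.
      intros m' E; injection E; intros; subst; auto. }
    destruct Hp as [p [Hp1 [Hp2 Hp3]]].
    apply (fnull_mono NP _ (fun th => Dv A i m p th * th (wi m j p) +
       rsum (np m) (fun x => if Nat.eqb x p then 0 else th (wi m j x) * Dv A i m x th) = 0)).
    { intros th E. rewrite <- (D_split A i m j p th HA Hp1). auto. }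
    apply null_affine. apply widx_P; auto. apply D_locLip; auto. apply rest_locLip; auto.
    apply D_indep; auto. apply widx_ge. apply rest_indep; auto. apply IHm; auto.
Qed.

Definition Ev A1 A2 i m j th := Dv A1 i m j th - Dv A2 i m j th.

Lemma E_locLip A1 A2 i m j : (j < np m)%nat -> locLip NP (Ev A1 A2 i m j).
Proof. intros. apply (locLip_minus NP (Dv A1 i m j) (Dv A2 i m j)); apply D_locLip; auto. Qed.
Lemma E_indep A1 A2 i m j v : (j < np m)%nat -> (ofs m <= v)%nat -> indep v (Ev A1 A2 i m j).
Proof. intros. apply (indep_minus v (Dv A1 i m j) (Dv A2 i m j)); apply D_indep; auto. Qed.

Lemma Eclaim A1 A2 i : (i < n_in)%nat -> active_each_layer widths A1 -> active_each_layer widths A2 ->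
  forall m, (m <= dp)%nat -> (exists k j, (k < m)%nat /\ (j < wd k)%nat /\ A1 k j <> A2 k j) ->
  exists j, (j < np m)%nat /\ fnull NP (fun th => Ev A1 A2 i m j th = 0).
Proof. intros Hi H1 H2. induction m; intros Hm [k [j [Hk [Hj Hd]]]]. lia.
  destruct (classic (exists l, (l < wd m)%nat /\ A1 m l <> A2 m l)) as [[l [Hl Hd2]]|Hno].
  - exists l. split. simpl; auto.
    destruct (A1 m l) eqn:E1; destruct (A2 m l) eqn:E2; try congruence.
    + apply (fnull_mono NP _ (fun th => Dv A1 i (S m) l th = 0)).
      intros th. unfold Ev. simpl Dv at 2. rewrite E2. lra.
      apply Dnull; auto. simpl; auto. intros; lia. intros m' E; injection E; intros; subst; auto.
    + apply (fnull_mono NP _ (fun th => Dv A2 i (S m) l th = 0)).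
      intros th. unfold Ev. simpl Dv at 1. rewrite E1. lra.
      apply Dnull; auto. simpl; auto. intros; lia. intros m' E; injection E; intros; subst; auto.
  - assert (Hk' : (k < m)%nat).
    { destruct (Nat.eq_dec k m); [|lia]. subst. exfalso. apply Hno. eauto. }
    destruct IHm as [p [Hp Hnull]]. lia. exists k, j; auto.
    destruct (H1 m ltac:(lia)) as [l [Hl HA1]].
    assert (HA2 : A2 m l = true).
    { destruct (Bool.bool_dec (A1 m l) (A2 m l)) as [E|E]. congruence. exfalso; apply Hno; eauto. }
    exists l. split. simpl; auto.
    apply (fnull_mono NP _ (fun th => Ev A1 A2 i m p th * th (wi m l p) +
       rsum (np m) (fun x => if Nat.eqb x p then 0 else th (wi m l x) * Ev A1 A2 i m x th) = 0)).
    { intros th E.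
      assert (Eq : Ev A1 A2 i (S m) l th = Ev A1 A2 i m p th * th (wi m l p) +
       rsum (np m) (fun x => if Nat.eqb x p then 0 else th (wi m l x) * Ev A1 A2 i m x th)).
      { change (Ev A1 A2 i (S m) l th) with (Dv A1 i (S m) l th - Dv A2 i (S m) l th).
        simpl Dv. rewrite HA1, HA2.
        rewrite <- rsum_minus.
        rewrite (rsum_ext _ _ (fun x => th (wi m l x) * Ev A1 A2 i m x th)).
        rewrite (rsum_split _ (fun x => th (wi m l x) * Ev A1 A2 i m x th) p Hp). cbv beta. ring.
        intros; unfold Ev; ring. }
      rewrite <- Eq. exact E. }
    apply null_affine. apply widx_P; auto. apply E_locLip; auto.
    apply (locLip_rsum NP (np m) (fun x th => if Nat.eqb x p then 0 else th (wi m l x) * Ev A1 A2 i m x th)).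
    { intros x Hx. destruct (Nat.eqb x p). apply (locLip_const NP 0).
      apply (locLip_mult NP (fun th => th (wi m l x)) (Ev A1 A2 i m x)).
      apply locLip_coord, widx_P; auto. apply E_locLip; auto. }
    apply E_indep; auto. apply widx_ge.
    apply (indep_rsum _ (np m) (fun x th => if Nat.eqb x p then 0 else th (wi m l x) * Ev A1 A2 i m x th)).
    { intros x Hx. destruct (Nat.eqb_spec x p). apply (indep_const _ 0).
      apply (indep_mult _ (fun th => th (wi m l x)) (Ev A1 A2 i m x)).
      apply indep_coord. unfold widx. lia. apply E_indep; auto. apply widx_ge. }
    auto.
Qed.

Definition gF A i th := rsum (np dp) (fun j => th (oi j) * Dv A i dp j th).

Lemma gF_null A1 A2 i : (i < n_in)%nat -> active_each_layer widths A1 -> active_each_layer widths A2 ->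
  ~ pattern_eq widths A1 A2 -> fnull NP (fun th => gF A1 i th = gF A2 i th).
Proof. intros Hi H1 H2 Hne.
  assert (Hd : exists k j, (k < dp)%nat /\ (j < wd k)%nat /\ A1 k j <> A2 k j).
  { destruct (classic (exists k j, (k < dp)%nat /\ (j < wd k)%nat /\ A1 k j <> A2 k j)) as [h|h]; auto.
    exfalso. apply Hne. intros k j Hk Hj. destruct (Bool.bool_dec (A1 k j) (A2 k j)); auto.
    exfalso; apply h; eauto. }
  destruct (Eclaim A1 A2 i Hi H1 H2 dp (le_n _) Hd) as [p [Hp Hnull]].
  apply (fnull_mono NP _ (fun th => Ev A1 A2 i dp p th * th (oi p) +
       rsum (np dp) (fun x => if Nat.eqb x p then 0 else th (oi x) * Ev A1 A2 i dp x th) = 0)).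
  { intros th E. unfold gF in E.
    assert (rsum (np dp) (fun j => th (oi j) * Dv A1 i dp j th) - rsum (np dp) (fun j => th (oi j) * Dv A2 i dp j th) = 0) by lra.
    rewrite <- rsum_minus in H.
    rewrite (rsum_ext _ _ (fun x => th (oi x) * Ev A1 A2 i dp x th)) in H.
    rewrite (rsum_split _ (fun x => th (oi x) * Ev A1 A2 i dp x th) p Hp) in H. cbv beta in H. lra.
    intros; unfold Ev; ring. }
  apply null_affine. apply oidx_P; auto. apply E_locLip; auto.
  apply (locLip_rsum NP (np dp) (fun x th => if Nat.eqb x p then 0 else th (oi x) * Ev A1 A2 i dp x th)).
  { intros x Hx. destruct (Nat.eqb x p). apply (locLip_const NP 0).
    apply (locLip_mult NP (fun th => th (oi x)) (Ev A1 A2 i dp x)).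
    apply locLip_coord, oidx_P; auto. apply E_locLip; auto. }
  apply E_indep; auto. apply oidx_ge.
  apply (indep_rsum _ (np dp) (fun x th => if Nat.eqb x p then 0 else th (oi x) * Ev A1 A2 i dp x th)).
  { intros x Hx. destruct (Nat.eqb_spec x p). apply (indep_const _ 0).
    apply (indep_mult _ (fun th => th (oi x)) (Ev A1 A2 i dp x)).
    apply indep_coord. unfold oidx. lia. apply E_indep; auto. apply oidx_ge. }
  auto.
Qed.

End Net2.

Lemma cont_const c t0 : continuity_pt (fun _ => c) t0.
Proof. apply continuity_pt_const. intros x y; auto. Qed.
Lemma cont_plus f g t0 : continuity_pt f t0 -> continuity_pt g t0 -> continuity_pt (fun t => f t + g t) t0.
Proof. intros. apply (continuity_pt_plus f g); auto. Qed.
Lemma cont_mult f g t0 : continuity_pt f t0 -> continuity_pt g t0 -> continuity_pt (fun t => f t * g t) t0.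
Proof. intros. apply (continuity_pt_mult f g); auto. Qed.
Lemma cont_id t0 : continuity_pt (fun t => t) t0.
Proof. apply (derivable_continuous_pt id). apply derivable_pt_id. Qed.
Lemma cont_rsum n (f : nat -> R -> R) t0 : (forall j, (j<n)%nat -> continuity_pt (f j) t0) ->
  continuity_pt (fun t => rsum n (fun j => f j t)) t0.
Proof. induction n; intros H. apply (cont_const 0). simpl.
  apply (cont_plus (fun t => rsum n (fun j => f j t)) (f n)). apply IHn; intros; apply H; lia. apply H; lia. Qed.
Lemma relu_eq u : relu u = / 2 * (u + Rabs u).
Proof. unfold relu, Rmax. destruct (Rle_dec 0 u). rewrite Rabs_right by lra. field.
  rewrite Rabs_left by lra. field. Qed.
Lemma cont_relu g t0 : continuity_pt g t0 -> continuity_pt (fun t => relu (g t)) t0.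
Proof. intros H. replace (fun t => relu (g t)) with (fun t => / 2 * (g t + Rabs (g t))).
  2:{ apply functional_extensionality; intros; rewrite relu_eq; auto. }
  apply cont_mult. apply cont_const. apply cont_plus; auto.
  apply (continuity_pt_comp g Rabs); auto. apply Rcontinuity_abs. Qed.

Lemma cont_sign g : continuity_pt g 0 -> g 0 > 0 -> exists d, 0 < d /\ forall t, Rabs t < d -> g t > 0.
Proof. intros H Hg. unfold continuity_pt, continue_in, limit1_in, limit_in in H.
  destruct (H (g 0) Hg) as [alp [Ha F]]. exists alp. split. lra. intros t Ht.
  destruct (Req_dec t 0). subst; auto.
  assert (R_dist (g t) (g 0) < g 0). { apply (F t). split. split. exact I. auto. simpl. unfold R_dist. rewrite Rminus_0_r; auto. }
  unfold R_dist in H1. pose proof (Rle_abs (g 0 - g t)). rewrite Rabs_minus_sym in H1. lra. Qed.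

Lemma fin_delta n (Q : nat -> R -> Prop) : (forall j, (j<n)%nat -> exists d, 0 < d /\ forall t, Rabs t < d -> Q j t) ->
  exists d, 0 < d /\ forall t, Rabs t < d -> forall j, (j < n)%nat -> Q j t.
Proof. induction n; intros H. exists 1. split. lra. intros; lia.
  destruct IHn as [d1 [H1 F1]]. intros; apply H; lia.
  destruct (H n (Nat.lt_succ_diag_r n)) as [d2 [H2 F2]].
  exists (Rmin d1 d2). split. apply Rmin_glb_lt; auto. intros t Ht j Hj.
  pose proof (Rmin_l d1 d2). pose proof (Rmin_r d1 d2).
  destruct (Nat.eq_dec j n). subst. apply F2; lra. apply F1; [lra|lia]. Qed.

Section Net3.
Variable n_in : nat.
Variable widths : list nat.
Local Notation NP := (nparams n_in widths).
Local Notation np := (nprev n_in widths).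
Local Notation wd := (width widths).
Local Notation dp := (depth widths).
Local Notation wi := (widx n_in widths).
Local Notation oi := (oidx n_in widths).

Definition line (x : nat -> R) i t : nat -> R := fun m => x m + t * unit_vec i m.
Lemma line0 x i : line x i 0 = x.
Proof. apply functional_extensionality; intros; unfold line; ring. Qed.

Lemma relu_pos u : u > 0 -> relu u = u.
Proof. intros; unfold relu; apply Rmax_right; lra. Qed.
Lemma relu_neg u : u < 0 -> relu u = 0.
Proof. intros; unfold relu; apply Rmax_left; lra. Qed.

Lemma post_line A th x i t : in_region n_in widths A th x -> in_region n_in widths A th (line x i t) ->
  forall m j, (j < np m)%nat -> post n_in widths th (line x i t) m j = post n_in widths th x m j + t * Dv n_in widths A i m j th.
Proof. intros R1 R2. induction m; intros j Hj.
  - simpl. unfold line. auto.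
  - simpl in Hj. assert (Hm : (m < dp)%nat) by (apply width_lt; lia).
    specialize (R1 m j Hm Hj). specialize (R2 m j Hm Hj). unfold preact in R1, R2.
    rewrite (rsum_ext _ (fun j' => th (wi m j j') * post n_in widths th (line x i t) m j')
       (fun j' => th (wi m j j') * post n_in widths th x m j' + t * (th (wi m j j') * Dv n_in widths A i m j' th))) in R2.
    2:{ intros j' Hj'. rewrite IHm by auto. ring. }
    simpl post. simpl Dv.
    rewrite (rsum_ext _ (fun j' => th (wi m j j') * post n_in widths th (line x i t) m j')
       (fun j' => th (wi m j j') * post n_in widths th x m j' + t * (th (wi m j j') * Dv n_in widths A i m j' th))).
    2:{ intros j' Hj'. rewrite IHm by auto. ring. }
    rewrite rsum_plus, rsum_scal in *.
    destruct (A m j).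
    + rewrite !relu_pos by lra. ring.
    + rewrite !relu_neg by lra. ring.
Qed.

Lemma net_line A th x i t : in_region n_in widths A th x -> in_region n_in widths A th (line x i t) ->
  net n_in widths th (line x i t) = net n_in widths th x + t * gF n_in widths A i th.
Proof. intros R1 R2. unfold net, gF.
  rewrite (rsum_ext _ _ (fun j => th (oi j) * post n_in widths th x dp j + t * (th (oi j) * Dv n_in widths A i dp j th))).
  rewrite rsum_plus, rsum_scal. ring.
  intros j Hj. rewrite (post_line A th x i t R1 R2) by auto. ring. Qed.

Lemma post_cont th x i : forall m j, continuity_pt (fun t => post n_in widths th (line x i t) m j) 0.
Proof. induction m; intros j.
  - simpl. unfold line. apply cont_plus. apply cont_const. apply cont_mult. apply cont_id. apply cont_const.
  - simpl. apply cont_relu. apply (continuity_pt_minus _ (fun _ => th (bidx n_in widths m j))).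
    apply (cont_rsum _ (fun j' t => th (wi m j j') * post n_in widths th (line x i t) m j')).
    intros. apply cont_mult. apply cont_const. auto. apply cont_const.
Qed.

Lemma region_near A th x i : in_region n_in widths A th x ->
  exists d, 0 < d /\ forall t, Rabs t < d -> in_region n_in widths A th (line x i t).
Proof. intros R.
  destruct (fin_delta dp (fun k t => forall j, (j < wd k)%nat ->
     if A k j then preact n_in widths th (line x i t) k j - th (bidx n_in widths k j) > 0
     else preact n_in widths th (line x i t) k j - th (bidx n_in widths k j) < 0)) as [d [Hd F]].
  { intros k Hk. apply (fin_delta (wd k) (fun j t => if A k j then preact n_in widths th (line x i t) k j - th (bidx n_in widths k j) > 0
     else preact n_in widths th (line x i t) k j - th (bidx n_in widths k j) < 0)).
    intros j Hj. specialize (R k j Hk Hj).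
    assert (Hc : continuity_pt (fun t => preact n_in widths th (line x i t) k j - th (bidx n_in widths k j)) 0).
    { unfold preact. apply (continuity_pt_minus _ (fun _ => th (bidx n_in widths k j))).
      apply (cont_rsum _ (fun j' t => th (wi k j j') * post n_in widths th (line x i t) k j')).
      intros. apply cont_mult. apply cont_const. apply post_cont. apply cont_const. }
    destruct (A k j).
    - apply (cont_sign (fun t => preact n_in widths th (line x i t) k j - th (bidx n_in widths k j))); auto.
      simpl. rewrite line0. auto.
    - destruct (cont_sign (fun t => - (preact n_in widths th (line x i t) k j - th (bidx n_in widths k j)))) as [d [Hd F]].
      apply (continuity_pt_opp (fun t => preact n_in widths th (line x i t) k j - th (bidx n_in widths k j))). auto.
      rewrite line0. lra.
      exists d. split; auto. intros t Ht. specialize (F t Ht). simpl in F. lra. }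
  exists d. split; auto. intros t Ht k j Hk Hj. apply F; auto.
Qed.

Lemma gradient_ok A th x : in_region n_in widths A th x ->
  is_gradient n_in widths th x (fun i => gF n_in widths A i th).
Proof. intros R i Hi. destruct (region_near A th x i R) as [d [Hd F]].
  intros eps He. exists (mkposreal d Hd). intros h Hh0 Hh. simpl in Hh.
  change (fun t => net n_in widths th (fun m => x m + t * unit_vec i m)) with (fun t => net n_in widths th (line x i t)).
  cbv beta. rewrite Rplus_0_l.
  change (net n_in widths th (fun m => x m + h * unit_vec i m)) with (net n_in widths th (line x i h)).
  change (net n_in widths th (fun m => x m + 0 * unit_vec i m)) with (net n_in widths th (line x i 0)).
  rewrite (net_line A th x i h R (F h Hh)). rewrite line0.
  replace ((net n_in widths th x + h * gF n_in widths A i th - net n_in widths th x) / h - gF n_in widths A i th) with 0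
    by (field; auto).
  rewrite Rabs_R0. auto.
Qed.

Lemma post_indep0 th : n_in = O -> forall m j x y, post n_in widths th x (S m) j = post n_in widths th y (S m) j.
Proof. intros H0. induction m; intros j x y.
  - simpl. unfold nprev. rewrite H0. simpl. auto.
  - change (post n_in widths th x (S (S m)) j) with
      (relu (rsum (np (S m)) (fun j' => th (wi (S m) j j') * post n_in widths th x (S m) j') - th (bidx n_in widths (S m) j))).
    change (post n_in widths th y (S (S m)) j) with
      (relu (rsum (np (S m)) (fun j' => th (wi (S m) j j') * post n_in widths th y (S m) j') - th (bidx n_in widths (S m) j))).
    rewrite (rsum_ext _ _ (fun j' => th (wi (S m) j j') * post n_in widths th y (S m) j')). auto.
    intros j' _. rewrite (IHm j' x y). auto.
Qed.

Lemma patterns_eq0 A1 A2 th x1 x2 : n_in = O -> in_region n_in widths A1 th x1 -> in_region n_in widths A2 th x2 ->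
  pattern_eq widths A1 A2.
Proof. intros H0 R1 R2 k j Hk Hj. specialize (R1 k j Hk Hj). specialize (R2 k j Hk Hj).
  assert (E : preact n_in widths th x1 k j = preact n_in widths th x2 k j).
  { unfold preact. destruct k. unfold nprev. rewrite H0. simpl. auto.
    apply rsum_ext. intros. rewrite (post_indep0 th H0 k i x1 x2). auto. }
  rewrite E in R1. destruct (A1 k j), (A2 k j); auto; lra. Qed.

End Net3.

Fixpoint bools (w : nat) : list (list bool) := match w with
  | O => nil :: nil
  | S w' => flat_map (fun l => (false :: l) :: (true :: l) :: nil) (bools w') end.
Lemma bools_cover w (f : nat -> bool) : exists bs, In bs (bools w) /\ forall j, (j < w)%nat -> nth j bs false = f j.
Proof. revert f. induction w; intros f. exists nil. split. left; auto. intros; lia.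
  destruct (IHw (fun j => f (S j))) as [l [Hl Hf]]. exists (f O :: l). split.
  - simpl. apply in_flat_map. exists l. split; auto. destruct (f O); simpl; auto.
  - intros j Hj. destruct j; simpl; auto. apply Hf; lia. Qed.

Fixpoint pats (ws : list nat) (n : nat) : list pattern := match n with
  | O => (fun _ _ => false) :: nil
  | S m => flat_map (fun R => map (fun bs => (fun k j => if Nat.eqb k m then nth j bs false else R k j) : pattern)
                                  (bools (width ws m))) (pats ws m) end.
Lemma pats_cover ws n (A : pattern) : exists R, In R (pats ws n) /\
  forall k j, (k < n)%nat -> (j < width ws k)%nat -> A k j = R k j.
Proof. induction n. exists (fun _ _ => false). split. left; auto. intros; lia.
  destruct IHn as [R [HR HA]]. destruct (bools_cover (width ws n) (A n)) as [bs [Hb Hbs]].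
  exists (fun k j => if Nat.eqb k n then nth j bs false else R k j). split.
  - simpl. apply in_flat_map. exists R. split; auto. apply in_map_iff. exists bs; auto.
  - intros k j Hk Hj. destruct (Nat.eqb_spec k n). subst. rewrite Hbs; auto. apply HA; auto; lia. Qed.

Lemma Dv_resp n_in widths A A' i : pattern_eq widths A A' ->
  forall m j th, (j < nprev n_in widths m)%nat -> Dv n_in widths A i m j th = Dv n_in widths A' i m j th.
Proof. intros H. induction m; intros j th Hj. auto.
  simpl in Hj. simpl. assert (Hm : (m < depth widths)%nat) by (apply width_lt; lia).
  rewrite (H m j Hm Hj). destruct (A' m j); auto. apply rsum_ext. intros. rewrite IHm; auto. Qed.

Lemma gF_resp n_in widths A A' i th : pattern_eq widths A A' -> gF n_in widths A i th = gF n_in widths A' i th.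
Proof. intros H. unfold gF. apply rsum_ext. intros. rewrite (Dv_resp n_in widths A A' i H); auto. Qed.

Theorem mainTheorem9 (n_in : nat) (widths : list nat) :
  exists Null : (nat -> R) -> Prop,
    lebesgue_null (nparams n_in widths) Null /\
    forall th : nat -> R, ~ Null th ->
    forall A1 A2 : pattern,
      ~ pattern_eq widths A1 A2 ->
      (exists x, in_region n_in widths A1 th x) ->
      (exists x, in_region n_in widths A2 th x) ->
      active_each_layer widths A1 ->
      active_each_layer widths A2 ->
      forall x1 x2,
        in_region n_in widths A1 th x1 ->
        in_region n_in widths A2 th x2 ->
        exists g1 g2 : nat -> R,
          is_gradient n_in widths th x1 g1 /\
          is_gradient n_in widths th x2 g2 /\
          exists i, (i < n_in)%nat /\ g1 i <> g2 i.
Proof.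
  assert (HP : (0 < nparams n_in widths)%nat) by (unfold nparams; lia).
  destruct (Nat.eq_dec n_in 0) as [H0|H0].
  - exists (fun _ => False). split. apply fnull_lebesgue; auto. apply fnull_empty.
    intros th _ A1 A2 Hne _ _ _ _ x1 x2 R1 R2. exfalso. apply Hne.
    apply (patterns_eq0 n_in widths A1 A2 th x1 x2 H0 R1 R2).
  - set (PL := pats widths (depth widths)).
    exists (fun th => exists R1, In R1 PL /\ exists R2, In R2 PL /\
      ((active_each_layer widths R1 /\ active_each_layer widths R2 /\ ~ pattern_eq widths R1 R2) /\
       gF n_in widths R1 0 th = gF n_in widths R2 0 th)).
    split.
    + apply fnull_lebesgue; auto.
      apply (fnull_list _ PL (fun R1 th => exists R2, In R2 PL /\
        ((active_each_layer widths R1 /\ active_each_layer widths R2 /\ ~ pattern_eq widths R1 R2) /\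
         gF n_in widths R1 0 th = gF n_in widths R2 0 th))).
      intros R1 _.
      apply (fnull_list _ PL (fun R2 th =>
        ((active_each_layer widths R1 /\ active_each_layer widths R2 /\ ~ pattern_eq widths R1 R2) /\
         gF n_in widths R1 0 th = gF n_in widths R2 0 th))).
      intros R2 _. apply fnull_guard. intros [Ha1 [Ha2 Hne]].
      apply gF_null; auto. lia.
    + intros th Hnull A1 A2 Hne _ _ Ha1 Ha2 x1 x2 R1 R2.
      exists (fun i => gF n_in widths A1 i th), (fun i => gF n_in widths A2 i th).
      split. apply gradient_ok; auto. split. apply gradient_ok; auto.
      exists 0%nat. split. lia. intros E. apply Hnull.
      destruct (pats_cover widths (depth widths) A1) as [Q1 [HQ1 E1]].
      destruct (pats_cover widths (depth widths) A2) as [Q2 [HQ2 E2]].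
      exists Q1. split; auto. exists Q2. split; auto.
      assert (P1e : pattern_eq widths A1 Q1) by (intros k j; apply E1).
      assert (P2e : pattern_eq widths A2 Q2) by (intros k j; apply E2).
      split; [split; [|split]|].
      * intros k Hk. destruct (Ha1 k Hk) as [j [Hj Hj2]]. exists j. rewrite <- (P1e k j); auto.
      * intros k Hk. destruct (Ha2 k Hk) as [j [Hj Hj2]]. exists j. rewrite <- (P2e k j); auto.
      * intros Hq. apply Hne. intros k j Hk Hj. rewrite (P1e k j), (P2e k j); auto.
      * rewrite <- (gF_resp n_in widths A1 Q1 0 th P1e), <- (gF_resp n_in widths A2 Q2 0 th P2e). auto.
Qed.
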